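(* Let $S$ be a finite Abelian group, $t\ge 1$, and let $X$ be a set of $m$ MIX servers equipped with an $(m,b,t)$-verifiers set system $(X,\{B_1,\dots,B_b\})$; write each block as an ordered tuple $B_k=(MIX_{k,1},\dots,MIX_{k,t+1})$ with leader $MIX_{k,1}$ (blocks may share servers). Consider the following protocol transmitting messages $s_1,\dots,s_v\in S$ from a single party $R$ to $v$ recipients. For each $i$, $R$ chooses shares $\pi^1_{i,1},\dots,\pi^1_{i,t+1}\in S$ uniformly at random subject to $\sum_j \pi^1_{i,j}=s_i$ and privately sends $\pi^1_{i,j}$ to $MIX_{1,j}$. For $k=1,\dots,b$: the leader of $B_k$ chooses a uniformly random $\rho_k\in S_v$ and the servers of $B_k$ reindex their shares by $\pi^k_{i,j}:=\pi^k_{\rho_k(i),j}$; the leader of $B_k$ chooses uniformly random modifiers $\omega^k_{i,j}\in S$ and privately sends $\omega^k_{i,j}$ to $MIX_{k,j}$, who adds it to its share, giving shares $\pi^{k+1}_{i,j}$ of $\pi^{k+1}_i=\omega^k_i+\pi^k_i$ where $\omega^k_i=\sum_j\omega^k_{i,j}$; shares are then passed to the next block either (a) by re-sharing: each server of $B_k$ re-shares its share additively among the $t+1$ servers of $B_{k+1}$ with fresh uniform randomness and each server of $B_{k+1}$ sums the $t+1$ values it receives (with a final re-sharing after $B_b$), or (b) directly ($MIX_{k,j}$ to $MIX_{k+1,j}$) in the case that $X$ is under $t$-confinement. Finally, denoting the shares held by $MIX_{b,j}$ by $\phi_{i,j}$, $MIX_{b,j}$ sends $\phi_{i,j}$ to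 the $i$-th recipient over $t+1$ network-disjoint paths (one per $j$), and the recipient sums the $t+1$ shares. Suppose the adversary is passive, computationally unbounded, and controls at most $t$ parties (MIX servers or communication paths). Then this protocol is a perfectly reliable, perfectly private and perfectly anonymous message transmission protocol.
   Context: A set system $(X,\mathcal{B})$ with $X=\{1,\dots,m\}$ and blocks $B_1,\dots,B_b\subset X$ is an $(m,b,t)$-verifiers set system if $|X|=m$, $|B_i|=t+1$ for all $i$, and for every $F\subset X$ with $|F|\le t$ there is a block $B_i$ with $F\cap B_i=\emptyset$. The set $X$ of MIX servers is under $t$-confinement if for every $T\subseteq X$ with $|T|=t$, the members of $T$ appear in at most $t$ distinct positions (indices $j$ in the ordered tuples $B_k$) over all blocks used. Private channels are assumed between $R$ and servers of $B_1$, between servers of consecutive blocks, and from servers of $B_b$ to the recipients via the disjoint paths. Perfectly reliable: each message is received by its intended recipient with probability 1. Perfectly private: for any coalition of at most $t$ corrupted parties, the probability of correctly determining any transmitted message is the same whether or not they are given their view. Perfectly anonymous: for any coalition of at most $t$ corrupted parties, the probability of correctly determining which recipient received any given message is the same whether or not they are given their view. *)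

(* Defs.v *)
From mathcomp Require Import all_boot all_order all_algebra all_fingroup.
Set Implicit Arguments. Unset Strict Implicit. Unset Printing Implicit Defensive.
Import GRing.Theory Num.Theory.
Local Open Scope ring_scope.

(* Set systems.  Servers are X = 'I_m; block k (k : 'I_b) is the ordered
   (t+1)-tuple (B k 0, ..., B k t); position 0 is the leader.            *)

Definition verifiers (m b t : nat) (B : 'I_b -> 'I_t.+1 -> 'I_m) : Prop :=
  (forall k, injective (B k)) /\
  (forall F : {set 'I_m}, (#|F| <= t)%N -> exists k : 'I_b, forall j, B k j \notin F).

Definition t_confined (m b t : nat) (B : 'I_b -> 'I_t.+1 -> 'I_m) : Prop :=
  forall T : {set 'I_m}, #|T| = t ->
    (#|[set j : 'I_t.+1 | [exists k : 'I_b, B k j \in T]]| <= t)%N.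

Section Protocol.
Variables (S : finZmodType) (t m b v : nat) (B : 'I_b -> 'I_t.+1 -> 'I_m).

Definition Msg := {ffun 'I_v -> S}.

(* All random coins of the protocol:
   - pi1 (i,j)      : initial shares chosen by R,
   - rho k          : permutation chosen by the leader of block k,
   - om (k,i,j)     : modifiers chosen by the leader of block k,
   - rs (k,i,j,l)   : the t free pieces (l < t) of the additive re-sharing by
                      server j of block k of its share of message i
                      (the last piece is the share minus their sum). *)
Definition Coins := ({ffun 'I_v * 'I_t.+1 -> S} * {ffun 'I_b -> {perm 'I_v}}
  * {ffun 'I_b * 'I_v * 'I_t.+1 -> S} * {ffun 'I_b * 'I_v * 'I_t.+1 * 'I_t -> S})%type.

Definition pi1 (c : Coins) i j := c.1.1.1 (i, j).
Definition rhoN (c : Coins) (n : nat) : {perm 'I_v} :=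
  if insub n is Some k then c.1.1.2 k else 1%g.
Definition omN (c : Coins) (n : nat) i j : S :=
  if insub n is Some k then c.1.2 (k, i, j) else 0.
Definition rsN (c : Coins) (n : nat) i j (l : 'I_t) : S :=
  if insub n is Some k then c.2 (k, i, j, l) else 0.

(* Support of the coins for messages s: initial shares sum to s_i, and the
   modifiers of each block and index sum to 0 (so that they re-randomize the
   sharing without changing the shared value); the coins are drawn uniformly
   from this set (i.e. all components independent, each uniform subject to
   its constraint). *)
Definition Omega (s : Msg) : {set Coins} :=
  [set c : Coins | [forall i, \sum_(j < t.+1) pi1 c i j == s i] &&
                   [forall k : 'I_b, forall i, \sum_(j < t.+1) c.1.2 (k, i, j) == 0]].

Definition piece (c : Coins) (n : nat) (z : S) i j (j' : 'I_t.+1) : S :=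
  if insub (val j') is Some l then rsN c n i j l
  else z - \sum_(l < t) rsN c n i j l.

(* shares held by the servers of the n-th block (0-based) before it mixes;
   [a = true]: variant (a) re-sharing, [a = false]: variant (b) direct passing.
   sh a c b are the final shares phi held by the last block (in variant (a)
   after the final re-sharing among the servers of the last block). *)
Fixpoint sh (a : bool) (c : Coins) (n : nat) : 'I_v -> 'I_t.+1 -> S :=
  match n with
  | 0 => pi1 c
  | n'.+1 => fun i j' =>
      let q i j := sh a c n' (rhoN c n' i) j + omN c n' i j in
      if a then \sum_(j < t.+1) piece c n' (q i j) i j j' else q i j'
  end.

Definition qsh a c n i j := sh a c n (rhoN c n i) j + omN c n i j.

Definition phi a c := sh a c b.

Definition output a c (i : 'I_v) : S := \sum_(j < t.+1) phi a c i j.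

(* composite mixing permutation: shares at index i of step n are shares of
   message s_(tau c n i) *)
Fixpoint tau (c : Coins) (n : nat) : {perm 'I_v} :=
  match n with 0 => 1%g | n'.+1 => (rhoN c n' * tau c n')%g end.

(* corruptible parties: MIX servers and the communication paths (i,j) *)
Definition Party := ('I_m + ('I_v * 'I_t.+1))%type.

Definition srv (n : nat) (j : 'I_t.+1) : option 'I_m :=
  omap (fun k : 'I_b => B k j) (insub n).
Definition obsBy (C : {set Party}) n j : bool :=
  if srv n j is Some x then inl x \in C else false.

Inductive label :=
| LInit of 'I_v & 'I_t.+1                   (* R -> MIX_{1,j}: pi1 (i,j) *)
| LPerm of 'I_b                              (* leader -> servers of B_k : rho_k *)
| LMod of 'I_b & 'I_v & 'I_t.+1              (* leader -> MIX_{k,j} : om *)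
| LPiece of 'I_b & 'I_v & 'I_t.+1 & 'I_t.+1  (* variant (a): MIX_{k,j} -> MIX_{k+1,j'} *)
| LPass of 'I_b & 'I_v & 'I_t.+1             (* variant (b): MIX_{k,j} -> MIX_{k+1,j} *)
| LFinal of 'I_v & 'I_t.+1.                  (* MIX_{b,j} -> recipient i via path (i,j) *)

Definition Val := (S + {perm 'I_v})%type.

Definition value (a : bool) (c : Coins) (l : label) : Val :=
  match l with
  | LInit i j => inl (pi1 c i j)
  | LPerm k => inr (rhoN c k)
  | LMod k i j => inl (omN c k i j)
  | LPiece k i j j' => inl (piece c k (qsh a c k i j) i j j')
  | LPass k i j => inl (qsh a c k i j)
  | LFinal i j => inl (phi a c i j)
  end.

Definition observes (a : bool) (C : {set Party}) (l : label) : bool :=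
  match l with
  | LInit i j => obsBy C 0 j
  | LPerm k => [exists j, obsBy C k j]
  | LMod k i j => obsBy C k 0 || obsBy C k j
  | LPiece k i j j' =>
      a && (obsBy C k j || obsBy C (if (k.+1 < b)%N then k.+1 else k) j')
  | LPass k i j => ~~ a && (k.+1 < b)%N && (obsBy C k j || obsBy C k.+1 j)
  | LFinal i j => obsBy C b.-1 j || (inr (i, j) \in C)
  end.

(* the view of coalition C: everything it sees (its own coins are determined
   by the values it sends) *)
Definition view (a : bool) (C : {set Party}) (c : Coins) : label -> option Val :=
  fun l => if observes a C l then Some (value a c l) else None.

Definition prior (D : {ffun Msg -> rat}) : Prop :=
  (forall s, 0 <= D s) /\ \sum_s D s = 1.

Definition Pr (D : {ffun Msg -> rat}) (E : Msg -> Coins -> bool) : rat :=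
  \sum_(s : Msg) D s * (#|[set c in Omega s | E s c]|%:R / #|Omega s|%:R).

(* the best probability of correctly determining Y is the same with and
   without the view V *)
Definition same_guess {W : Type} {T : eqType} (D : {ffun Msg -> rat})
  (V : Msg -> Coins -> W) (Y : Msg -> Coins -> T) : Prop :=
  (forall g : W -> T, exists y : T,
      Pr D (fun s c => g (V s c) == Y s c) <= Pr D (fun s c => y == Y s c)) /\
  (forall y : T, exists g : W -> T,
      Pr D (fun s c => y == Y s c) <= Pr D (fun s c => g (V s c) == Y s c)).

Definition perfectly_reliable (a : bool) : Prop :=
  forall D, prior D ->
    Pr D (fun s c => [forall i, output a c i == s (tau c b i)]) = 1.

Definition perfectly_private (a : bool) : Prop :=
  forall D, prior D -> forall C : {set Party}, (#|C| <= t)%N ->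
    forall i : 'I_v, same_guess D (fun _ c => view a C c) (fun s _ => s i).

(* the recipient of message i is (tau c b)^-1 i *)
Definition perfectly_anonymous (a : bool) : Prop :=
  forall D, prior D -> forall C : {set Party}, (#|C| <= t)%N ->
    forall i : 'I_v, same_guess D (fun _ c => view a C c) (fun _ c => (tau c b)^-1%g i).

End Protocol.

(* Main.v *)
Require Import Defs.
From mathcomp Require Import all_boot all_order all_algebra all_fingroup.
From mathcomp Require Import zify.
From Stdlib Require Import FunctionalExtensionality.
Set Implicit Arguments. Unset Strict Implicit. Unset Printing Implicit Defensive.
Import Order.TTheory GRing.Theory Num.Theory.
Local Open Scope ring_scope.

Section Basic.
Variables (S : finZmodType) (t b v : nat).
Implicit Types (c : Coins S t b v).

Lemma insub_ord n (k : 'I_n) : insub (val k) = Some k.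
Proof. exact: valK. Qed.

Lemma piece_sum c n z i j : \sum_(j' < t.+1) piece c n z i j j' = z.
Proof.
rewrite big_ord_recr /= /piece.
have -> : insub (val (@ord_max t)) = None :> option 'I_t.
  by apply/insubN; rewrite /= ltnn.
rewrite (eq_bigr (fun l : 'I_t => rsN c n i j l)); first by rewrite addrC subrK.
by move=> l _; rewrite /= (insub_ord l).
Qed.

Lemma sh_sum a c s n z : c \in Omega t b s -> (n <= b)%N ->
  \sum_(j < t.+1) sh a c n z j = s (tau c n z).
Proof.
rewrite inE => /andP[/forallP H1 /forallP H2].
elim: n z => [|n IH] z Hn /=.
  by rewrite perm1; apply/eqP/H1.
have qs : \sum_(j < t.+1) (sh a c n (rhoN c n z) j + omN c n z j) = s (tau c n.+1 z).
  rewrite big_split /= IH ?(ltnW Hn) // /omN.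
  have -> : insub n = Some (Ordinal Hn) by exact: insubT.
  by rewrite (eqP (forallP (H2 (Ordinal Hn)) z)) addr0 permM.
move: qs; case: a IH => IH qs //.
by rewrite exchange_big /= -qs; apply: eq_bigr => j _; rewrite piece_sum.
Qed.

End Basic.

Definition ind {S : zmodType} (bb : bool) (x : S) := if bb then x else 0.

Lemma alg1 (G: zmodType) (X I1 O A I2 : G) : X + I1 + (O + (A - X - I1 + I2)) = A + O + I2.
Proof.
rewrite addrCA -(addrA A (-X)) -opprD (addrA (X + I1)) (addrC (X + I1)) subrK.
by rewrite addrCA addrA.
Qed.

Lemma alg2 (G: zmodType) (A X e : G) : A - X - e + (X - A + e) = 0.
Proof. by rewrite -[A - X]opprB -opprD addNr. Qed.

Lemma sum_indb (G : zmodType) n (bb : bool) (f : 'I_n -> G) :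
  \sum_(j < n) ind bb (f j) = ind bb (\sum_(j < n) f j).
Proof. by case: bb; rewrite /ind // big1. Qed.

Section Loc.
Variables (S : finZmodType) (t b v : nat).
Implicit Types (c : Coins S t b v).

Lemma coins_eq c1 c2 : c1.1.1.1 = c2.1.1.1 -> c1.1.1.2 = c2.1.1.2 ->
  (forall k : 'I_b, forall z j, omN c1 k z j = omN c2 k z j) ->
  (forall k : 'I_b, forall z j l, rsN c1 k z j l = rsN c2 k z j l) -> c1 = c2.
Proof.
case: c1 c2 => [[[p1 P1] o1] r1] [[[p2 P2] o2] r2] /= -> -> Ho Hr.
congr (_, _, _).
  apply/ffunP => -[[k z] j]; have := Ho k z j; by rewrite /omN insub_ord.
apply/ffunP => -[[[k z] j] l]; have := Hr k z j l; by rewrite /rsN insub_ord.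
Qed.

Lemma sh_loc a c1 c2 N : c1.1.1.1 = c2.1.1.1 ->
  (forall n, (n < N)%N -> rhoN c1 n = rhoN c2 n /\ omN c1 n = omN c2 n /\ rsN c1 n = rsN c2 n) ->
  forall n, (n <= N)%N -> sh a c1 n = sh a c2 n.
Proof.
move=> Hp H; elim=> [|n IH] Hn; first by rewrite /= /pi1 Hp.
have [Hr [Ho Hs]] := H n Hn.
by rewrite /= IH ?(ltnW Hn) // Hr Ho /piece Hs.
Qed.
End Loc.

Section Construct.
Variables (S : finZmodType) (t m b v : nat) (B : 'I_b -> 'I_t.+1 -> 'I_m) (a : bool)
  (C : {set Party t m v}).
Variables (ks : nat) (Hks : (ks < b)%N) (s s' : Msg S v) (pi : {perm 'I_v}).
Definition Perms := {ffun 'I_b -> {perm 'I_v}}.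
Variables (pos qp : Perms -> nat -> 'I_v -> 'I_t.+1).
Implicit Types (c : Coins S t b v) (P : Perms).

Definition rhoP P n : {perm 'I_v} := if insub n is Some k then P k else 1%g.
Fixpoint rp P lo n : {perm 'I_v} := match n with 0 => 1%g
  | n'.+1 => if (lo <= n')%N then (rhoP P n' * rp P lo n')%g else 1%g end.

Definition dlt x := s' x - s x.
Definition Lc c := rp c.1.1.2 ks.+1 b.
Definition rhoNew c : {perm 'I_v} := ((Lc c)^-1 * pi * Lc c * rhoN c ks)%g.
Definition Dv c z := \sum_(j < t.+1) (sh a c ks (rhoNew c z) j - sh a c ks (rhoN c ks z) j)
   + dlt (tau c ks (rhoNew c z)).
Definition dl c n z := if (n <= ks)%N then dlt (tau c n z)
   else Dv c ((tau c ks.+1)^-1%g (tau c n z)).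

Definition F c : Coins S t b v :=
 let P := c.1.1.2 in
 (( [ffun xj : 'I_v * 'I_t.+1 => c.1.1.1 xj + ind (xj.2 == pos P 0 xj.1) (dlt xj.1)],
    [ffun k : 'I_b => if val k == ks then rhoNew c else P k]),
  [ffun kxj : 'I_b * 'I_v * 'I_t.+1 => let: (k, z, j) := kxj in c.1.2 kxj +
     ind (val k == ks) (sh a c ks (rhoN c ks z) j - sh a c ks (rhoNew c z) j
        - ind (j == pos P ks (rhoNew c z)) (dlt (tau c ks (rhoNew c z)))
        + ind (j == qp P ks z) (Dv c z))],
  [ffun kxjl : 'I_b * 'I_v * 'I_t.+1 * 'I_t => let: (k, z, j, l) := kxjl in c.2 kxjl +
     ind ((j == qp P k z) && (val l == val (pos P k.+1 z))) (dl c k.+1 z)]).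

Lemma pi1F c x j : pi1 (F c) x j = pi1 c x j + ind (j == pos c.1.1.2 0 x) (dlt x).
Proof. by rewrite /pi1 /F /= ffunE. Qed.

Lemma rhoNF c n : rhoN (F c) n = if n == ks then rhoNew c else rhoN c n.
Proof.
rewrite /rhoN /F /=; case: insubP => [k _ <-|].
  by rewrite ffunE.
by move=> Hn; case: eqP => // E; rewrite E Hks in Hn.
Qed.

Lemma omNF c n z j : omN (F c) n z j = omN c n z j +
  ind (n == ks) (sh a c ks (rhoN c ks z) j - sh a c ks (rhoNew c z) j
        - ind (j == pos c.1.1.2 ks (rhoNew c z)) (dlt (tau c ks (rhoNew c z)))
        + ind (j == qp c.1.1.2 ks z) (Dv c z)).
Proof.
rewrite /omN /F /=; case: insubP => [k _ <-|].
  by rewrite ffunE.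
by move=> Hn; case: eqP => [E|]; [rewrite E Hks in Hn|rewrite /ind addr0].
Qed.

Lemma rsNF c n z j l : (n < b)%N -> rsN (F c) n z j l = rsN c n z j l +
  ind ((j == qp c.1.1.2 n z) && (val l == val (pos c.1.1.2 n.+1 z))) (dl c n.+1 z).
Proof.
move=> Hn; rewrite /rsN /F /=; case: insubP => [k _ <-|].
  by rewrite ffunE.
by rewrite Hn.
Qed.

Lemma tau_eqP c1 c2 n : (forall k, (k < n)%N -> rhoN c1 k = rhoN c2 k) -> tau c1 n = tau c2 n.
Proof.
elim: n => [|n IH] H //=.
by rewrite H // IH // => k Hk; apply: H; apply: ltnW.
Qed.

Lemma tauF_low c n : (n <= ks)%N -> tau (F c) n = tau c n.
Proof.
move=> Hn; apply: tau_eqP => k Hk; rewrite rhoNF.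
by have -> : (k == ks) = false by apply/negbTE; rewrite neq_ltn (leq_trans Hk Hn).
Qed.


Hypothesis H1 : forall P n z, (n < b)%N -> n != ks -> pos P n (rhoP P n z) = qp P n z.
Hypothesis H2 : a = false -> forall P n z, (n < b)%N -> qp P n z = pos P n.+1 z.

Lemma sum_ind (q : 'I_t.+1) (X : S) : \sum_(j < t.+1) ind (j == q) X = X.
Proof. by rewrite -big_mkcond /= big_pred1_eq. Qed.

Lemma piece_F c n x z j j' d : (n < b)%N -> d = dl c n.+1 z ->
  piece (F c) n (x + ind (j == qp c.1.1.2 n z) d) z j j' =
  piece c n x z j j' + ind (j == qp c.1.1.2 n z) (ind (j' == pos c.1.1.2 n.+1 z) d).
Proof.
move=> Hn ->; set p := pos _ _ _; set q := qp _ _ _.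
rewrite /piece; case: insubP => [l _ Hl|Hj'].
  rewrite rsNF //; congr (_ + _); rewrite /ind.
  by case: (j == q) => //=; rewrite -(inj_eq val_inj) /= Hl.
rewrite (eq_bigr (fun l => rsN c n z j l + ind ((j == q) && (val l == val p)) (dl c n.+1 z)));
  last by move=> l _; rewrite rsNF.
rewrite big_split /=.
have Ej' : j' = ord_max by apply/val_inj/eqP; rewrite /= eqn_leq -ltnS ltn_ord leqNgt Hj'.
rewrite /ind; case: (j == q) => /=; last first.
  by rewrite big1_eq !addr0.
rewrite opprD addrACA; congr (_ + _).
case: (ltnP (val p) t) => Hp.
  rewrite (eq_bigr (fun l : 'I_t => if l == Ordinal Hp then dl c n.+1 z else 0)); last first.
    by move=> l _; rewrite -val_eqE.
  rewrite -big_mkcond big_pred1_eq.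
  have -> : (j' == p) = false.
    by apply/negbTE; rewrite -val_eqE Ej' /= neq_ltn Hp orbT.
  by rewrite subrr.
rewrite big1 ?subr0; last by move=> l _; rewrite (ltn_eqF (leq_trans (ltn_ord l) Hp)).
have -> : j' == p; last by [].
by rewrite -(inj_eq val_inj) Ej' /= eqn_leq Hp -ltnS ltn_ord.
Qed.


Lemma qstep c n z j : (n < b)%N ->
  (forall w j, sh a (F c) n w j = sh a c n w j + ind (j == pos c.1.1.2 n w) (dl c n w)) ->
  sh a (F c) n (rhoN (F c) n z) j + omN (F c) n z j =
  sh a c n (rhoN c n z) j + omN c n z j + ind (j == qp c.1.1.2 n z) (dl c n.+1 z).
Proof.
move=> Hn IH; rewrite rhoNF omNF IH.
case: eqP => [->|Hne].
  by rewrite /dl leqnn ltnn permK /ind alg1.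
rewrite /ind addr0 addrAC; congr (_ + _).
rewrite -[rhoN c n z]/(rhoP c.1.1.2 n z) H1 //; last by apply/eqP.
rewrite /dl.
have -> : (n.+1 <= ks)%N = (n <= ks)%N.
  by rewrite ltn_neqAle; case: eqP => // E; rewrite E in Hne.
by rewrite /= permM.
Qed.

Lemma sh_F c n z j : (n <= b)%N ->
  sh a (F c) n z j = sh a c n z j + ind (j == pos c.1.1.2 n z) (dl c n z).
Proof.
elim: n z j => [|n IH] z j Hn.
  by rewrite /= pi1F /dl leq0n perm1.
have Hn' : (n < b)%N by [].
have IH' := fun w j => IH w j (ltnW Hn').
rewrite /=; case: ifP => Ea.
  under eq_bigr => j0 _ do rewrite (@qstep c n z j0 Hn' IH') piece_F //.
  by rewrite big_split /= sum_ind Ea.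
by rewrite (@qstep c n z j Hn' IH') H2 // Ea.
Qed.

Lemma qsh_F c n z j : (n < b)%N ->
  qsh a (F c) n z j = qsh a c n z j + ind (j == qp c.1.1.2 n z) (dl c n.+1 z).
Proof. move=> Hn; apply: qstep => // w j'; exact: sh_F (ltnW Hn). Qed.

Lemma Omega_F c : c \in Omega t b s -> F c \in Omega t b s'.
Proof.
rewrite !inE => /andP[/forallP H1' /forallP H2']; apply/andP; split.
  apply/forallP => x; under eq_bigr => j _ do rewrite pi1F.
  by rewrite big_split /= sum_ind (eqP (H1' x)) /dlt addrC subrK.
apply/forallP => k; apply/forallP => x.
under eq_bigr => j _ do rewrite /F /= ffunE.
rewrite big_split /= (eqP (forallP (H2' k) x)) add0r sum_indb.
case: (val k == ks) => //.
rewrite /ind !big_split /= !sumrN !sum_ind /Dv sumrB.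
by apply/eqP; rewrite alg2.
Qed.

Lemma rp_tau c lo n : (lo <= n)%N -> tau c n = (rp c.1.1.2 lo n * tau c lo)%g.
Proof.
elim: n => [|n IH]; first by rewrite leqn0 => /eqP ->; rewrite mul1g.
rewrite leq_eqVlt => /orP[/eqP <-|Hlt].
  by case: (lo) => [|lo'] /=; rewrite ?ltnn ?mul1g.
by rewrite ltnS in Hlt; rewrite /= Hlt IH // mulgA.
Qed.

Lemma rp_eq P1 P2 lo n : (forall k, (lo <= k)%N -> rhoP P1 k = rhoP P2 k) ->
  rp P1 lo n = rp P2 lo n.
Proof.
move=> H; elim: n => [|n IH] //=.
by case: ifP => // Hl; rewrite H // IH.
Qed.

Lemma tauF_b c : tau (F c) b = (pi * tau c b)%g.
Proof.
rewrite (rp_tau (F c) Hks) (rp_tau c Hks).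
rewrite (@rp_eq _ c.1.1.2); last first.
  move=> k Hk; rewrite -[rhoP _ k]/(rhoN (F c) k) rhoNF.
  by have -> : (k == ks) = false by apply/negbTE; rewrite neq_ltn Hk orbT.
rewrite /= rhoNF eqxx tauF_low // /rhoNew /Lc.
by rewrite !mulgA mulgV mul1g.
Qed.

Hypothesis V0 : forall P x, obsBy B C 0 (pos P 0 x) = false.
Hypothesis Vk : forall j, obsBy B C ks j = false.
Hypothesis Va : a -> forall P k x, (k < b)%N -> obsBy B C k (qp P k x) = false /\
   obsBy B C (if (k.+1 < b)%N then k.+1 else k) (pos P k.+1 x) = false.
Hypothesis Vb : ~~ a -> forall P k x, (k.+1 < b)%N -> obsBy B C k (pos P k.+1 x) = false /\
   obsBy B C k.+1 (pos P k.+1 x) = false.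
Hypothesis Vf : forall P x, obsBy B C b.-1 (pos P b x) = false /\ inr (x, pos P b x) \notin C.

Lemma view_F c : view B a C (F c) = view B a C c.
Proof.
apply: functional_extensionality => l; rewrite /view.
case: l => [x j|k|k x j|k x j j'|k x j|x j] /=; case: ifP => // Hobs; congr (Some _).
- rewrite pi1F /ind; case: eqP => [Ej|]; last by rewrite addr0.
  by rewrite Ej V0 in Hobs.
- rewrite rhoNF; case: eqP => // Ek.
  by move/existsP: Hobs => [j]; rewrite Ek Vk.
- rewrite omNF /ind; case: eqP => [Ek|]; last by rewrite addr0.
  by rewrite Ek !Vk in Hobs.
- rewrite qsh_F // piece_F // /ind.
  case: eqP => [Ej|]; last by rewrite addr0.
  case: eqP => [Ej'|]; last by rewrite addr0.
  move/andP: Hobs => [Ha]; have [E1 E2] := Va Ha c.1.1.2 x (ltn_ord k).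
  by rewrite Ej Ej' E1 E2.
- move/andP: Hobs => [/andP[Ha Hk]] Hobs.
  rewrite qsh_F // H2 ?(negbTE Ha) // /ind.
  case: eqP => [Ej|]; last by rewrite addr0.
  have [E1 E2] := Vb Ha c.1.1.2 x Hk.
  by rewrite Ej E1 E2 in Hobs.
- rewrite /phi sh_F // /ind; case: eqP => [Ej|]; last by rewrite addr0.
  have [E1 E2] := Vf c.1.1.2 x.
  by rewrite Ej E1 (negbTE E2) in Hobs.
Qed.

Lemma F_inj : injective F.
Proof.
move=> c1 c2 E.
have HF : forall n, rhoN (F c1) n = rhoN (F c2) n by move=> n; rewrite E.
have Hne : forall n, n != ks -> rhoN c1 n = rhoN c2 n.
  by move=> n Hn; have := HF n; rewrite !rhoNF (negbTE Hn).
have HL : Lc c1 = Lc c2.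
  apply: rp_eq => k Hk; apply: Hne; by rewrite neq_ltn Hk orbT.
have Hall : forall n, rhoN c1 n = rhoN c2 n.
  move=> n; case: (eqVneq n ks) => [->|Hn]; last exact: Hne.
  have := HF ks; rewrite !rhoNF eqxx /rhoNew HL; exact: mulgI.
have HP : c1.1.1.2 = c2.1.1.2.
  by apply/ffunP => k; have := Hall k; rewrite /rhoN insub_ord.
have Htau : forall n, tau c1 n = tau c2 n by move=> n; apply: tau_eqP.
have Hp : c1.1.1.1 = c2.1.1.1.
  apply/ffunP => -[x j]; have := congr1 (fun c => pi1 c x j) E.
  by rewrite !pi1F HP => /addIr.
have Hom : forall n z j, n != ks -> omN c1 n z j = omN c2 n z j.
  move=> n z j Hn; have := congr1 (fun c => omN c n z j) E.
  by rewrite !omNF (negbTE Hn) /ind !addr0.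
have Hrs : forall n z j l, (n < b)%N -> dl c1 n.+1 z = dl c2 n.+1 z ->
    rsN c1 n z j l = rsN c2 n z j l.
  move=> n z j l Hn Hd; have := congr1 (fun c => rsN c n z j l) E.
  by rewrite !rsNF // HP Hd => /addIr.
have Hsh : sh a c1 ks = sh a c2 ks.
  apply: (@sh_loc _ _ _ _ a c1 c2 ks Hp) => // n Hn.
  have Hn' : n != ks by rewrite neq_ltn Hn.
  split; first exact: Hall.
  split; first by do 2 (apply: functional_extensionality => ?); apply: Hom.
  do 3 (apply: functional_extensionality => ?); apply: Hrs; first exact: ltn_trans Hks.
  by rewrite /dl Hn Htau.
have HDv : forall z, Dv c1 z = Dv c2 z.
  by move=> z; rewrite /Dv /rhoNew HL Hall Hsh Htau.
have Hdl : forall n z, dl c1 n z = dl c2 n z.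
  by move=> n z; rewrite /dl !Htau HDv.
apply: coins_eq => //.
  move=> k z j; case: (eqVneq (val k) ks) => [Ek|Hk]; last exact: Hom.
  have := congr1 (fun c => omN c k z j) E.
  rewrite !omNF Ek eqxx HP /rhoNew HL Hall Hsh HDv Htau => /addIr.
  by [].

by move=> k z j l; apply: Hrs.
Qed.

End Construct.

Local Close Scope ring_scope.

Section Count.
Variables (t m b v : nat) (B : 'I_b -> 'I_t.+1 -> 'I_m) (C : {set Party t m v}).
Definition Tc : {set 'I_m} := [set y | inl y \in C].
Definition PT (T : {set 'I_m}) : {set 'I_t.+1} := [set j | [exists k : 'I_b, B k j \in T]].

Lemma obsBy_ord (k : 'I_b) j : obsBy B C k j = (B k j \in Tc).
Proof. by rewrite /obsBy /srv insub_ord /= inE. Qed.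

Lemma obsBy_PT n j : j \notin PT Tc -> obsBy B C n j = false.
Proof.
rewrite /obsBy /srv; case: insubP => [k _ _|] //= Hj.
apply/negbTE; apply: contra Hj => H; rewrite inE; apply/existsP; exists k; by rewrite inE.
Qed.

Lemma card_Tc : (#|Tc| <= #|C|)%N.
Proof.
rewrite -(card_imset Tc (@inl_inj 'I_m ('I_v * 'I_t.+1)%type)); apply: subset_leq_card.
by apply/subsetP => p /imsetP[y]; rewrite inE => H ->.
Qed.

Lemma cnt (Q : {set 'I_t.+1}) x : #|C| <= t -> #|Q| <= #|Tc| ->
  exists j, (j \notin Q) && (inr (x, j) \notin C).
Proof.
move=> HC HQ.
set Pa : {set 'I_t.+1} := [set j | inr (x, j) \in C].
have HU : #|Tc| + #|Pa| <= #|C|.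
  have i1 : injective (fun j : 'I_t.+1 => (inr (x, j) : Party t m v)).
    by move=> j1 j2 [].
  rewrite -(card_imset Tc (@inl_inj 'I_m ('I_v * 'I_t.+1)%type)) -(card_imset Pa i1).
  rewrite -[_ + _]subn0.
  have <- : #|[set inl y | y in Tc] :&: [set inr (x, j) | j in Pa]| = 0.
    apply/eqP; rewrite cards_eq0; apply/eqP/setP => p; rewrite !inE.
    apply/negbTE; apply/andP => -[/imsetP[y _ ->] /imsetP[j _]] //.
  rewrite -cardsU; apply: subset_leq_card; apply/subsetP => p; rewrite inE.
  by case/orP => /imsetP[y]; rewrite inE => H ->.
have Hc : #|Q :|: Pa| < t.+1.
  rewrite ltnS cardsU; apply: leq_trans (leq_subr _ _) _; apply: leq_trans HC.
  by apply: leq_trans HU; rewrite leq_add2r.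
case: (pickP (fun j => j \notin Q :|: Pa)) => [j Hj|H0].
  by exists j; move: Hj; rewrite !inE negb_or.
have : Q :|: Pa = setT by apply/setP => j; rewrite in_setT; apply/negbFE; exact: H0 j.
by move=> E; move: Hc; rewrite E cardsT card_ord ltnn.
Qed.
Lemma blk_le (k : 'I_b) (T : {set 'I_m}) : injective (B k) ->
  #|[set j | B k j \in T]| <= #|T|.
Proof.
move=> Hi; rewrite -(card_imset _ Hi); apply: subset_leq_card.
by apply/subsetP => y /imsetP[j]; rewrite inE => H ->.
Qed.

Lemma PT_sub (T1 T2 : {set 'I_m}) : T1 \subset T2 -> PT T1 \subset PT T2.
Proof.
move=> H; apply/subsetP => j; rewrite !inE => /existsP[k Hk]; apply/existsP; exists k.
exact: (subsetP H).
Qed.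

Lemma PT_le (k0 : 'I_b) : t_confined B -> (forall k, injective (B k)) ->
  forall T : {set 'I_m}, #|T| <= t -> #|PT T| <= #|T|.
Proof.
move=> Hc Hi.
have Hm : t.+1 <= m.
  by have := leq_card _ (Hi k0); rewrite !card_ord.
suff H : forall d (T : {set 'I_m}), #|T| + d = t -> #|PT T| <= #|T|.
  by move=> T HT; apply: (H (t - #|T|)); rewrite subnKC.
elim=> [|d IH] T HT.
  by rewrite addn0 in HT; rewrite HT; exact: (Hc T HT).
rewrite leqNgt; apply/negP => Hlt.
have HTt : #|T| < t by rewrite -HT addnS ltnS leq_addr.
suff [y Hy Hc'] : exists2 y, y \notin T & #|T|.+1 < #|PT (y |: T)|.
  have := IH (y |: T); rewrite cardsU1 Hy add1n addSnnS => /(_ HT).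
  by rewrite leqNgt Hc'.
case: (eqVneq (PT T) setT) => [Efull|].
  have [y Hy] : exists y, y \notin T.
    case: (pickP (fun y => y \notin T)) => [y Hy|H0]; first by exists y.
    have : T = setT by apply/setP => y; rewrite in_setT; apply/negbFE; exact: H0 y.
    move=> E; move: HTt; rewrite E cardsT card_ord => Ht.
    by have := leq_trans Ht (leq_trans (leqnSn t) Hm); rewrite ltnn.
  exists y => //.
  have : PT (y |: T) = setT.
    by apply/eqP; rewrite eqEsubset subsetT -Efull PT_sub // subsetUr.
  by move=> ->; rewrite cardsT card_ord ltnS.
move=> /eqP Hne.
have [q Hq] : exists q, q \notin PT T.
  case: (pickP (fun q => q \notin PT T)) => [q Hq|H0]; first by exists q.
  by exfalso; apply: Hne; apply/setP => q; rewrite in_setT; apply/negbFE; exact: H0 q.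
exists (B k0 q).
  by apply: contra Hq => H; rewrite inE; apply/existsP; exists k0.
apply: leq_trans (_ : #|q |: PT T| <= _).
  by rewrite cardsU1 Hq add1n ltnS.
apply: subset_leq_card; apply/subsetP => j; rewrite !inE => /orP[/eqP ->|].
  by apply/existsP; exists k0; rewrite !inE eqxx.
by move/existsP=> [k Hk]; apply/existsP; exists k; rewrite !inE Hk orbT.
Qed.

Lemma cnt0 (Q : {set 'I_t.+1}) : #|C| <= t -> #|Q| <= #|Tc| -> exists j, j \notin Q.
Proof.
move=> HC HQ.
case: (pickP (fun j => j \notin Q)) => [j Hj|H0]; first by exists j.
have : Q = setT by apply/setP => j; rewrite in_setT; apply/negbFE; exact: H0 j.
move=> E; move: (leq_trans HQ (leq_trans card_Tc HC)); by rewrite E cardsT card_ord ltnn.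
Qed.

End Count.

Section Core.
Variables (S : finZmodType) (t m b v : nat) (B : 'I_b -> 'I_t.+1 -> 'I_m) (a : bool)
  (C : {set Party t m v}).

Definition goodF (s s' : Msg S v) (pi : {perm 'I_v}) :=
  exists F : Coins S t b v -> Coins S t b v, injective F /\
   forall c, c \in Omega t b s -> F c \in Omega t b s' /\
     view B a C (F c) = view B a C c /\ tau (F c) b = (pi * tau c b)%g.

Lemma core_gen (ks : nat) (Hks : (ks < b)%N) (pos qp : Perms b v -> nat -> 'I_v -> 'I_t.+1) :
 (forall P n z, (n < b)%N -> n != ks -> pos P n (rhoP P n z) = qp P n z) ->
 (a = false -> forall P n z, (n < b)%N -> qp P n z = pos P n.+1 z) ->
 (forall P x, obsBy B C 0 (pos P 0 x) = false) ->
 (forall j, obsBy B C ks j = false) ->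
 (a -> forall P k x, (k < b)%N -> obsBy B C k (qp P k x) = false /\
   obsBy B C (if (k.+1 < b)%N then k.+1 else k) (pos P k.+1 x) = false) ->
 (~~ a -> forall P k x, (k.+1 < b)%N -> obsBy B C k (pos P k.+1 x) = false /\
   obsBy B C k.+1 (pos P k.+1 x) = false) ->
 (forall P x, obsBy B C b.-1 (pos P b x) = false /\ inr (x, pos P b x) \notin C) ->
 forall s s' pi, goodF s s' pi.
Proof.
move=> H1 H2 V0 Vk Va Vb Vf s s' pi.
exists (F a ks s s' pi pos qp); split; first exact: F_inj.
move=> c Hc; split; first exact: Omega_F.
split; first exact: (view_F Hks s s' pi H1 H2 V0 Vk Va Vb Vf).
exact: tauF_b.
Qed.

Fixpoint tauP (P : Perms b v) n : {perm 'I_v} :=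
  match n with 0 => 1%g | n'.+1 => (rhoP P n' * tauP P n')%g end.

Lemma core : verifiers B -> (a = false -> t_confined B) -> #|C| <= t ->
  forall s s' pi, goodF s s' pi.
Proof.
move=> [Hinj Hver] Hconf HC.
have HT : #|Tc C| <= t by apply: leq_trans HC; apply: card_Tc.
have [ks Hks] := Hver (Tc C) HT.
have Vk : forall j, obsBy B C ks j = false.
  by move=> j; rewrite obsBy_ord; apply/negbTE/Hks.
have Hb1 : b.-1 < b by rewrite ltn_predL (leq_ltn_trans (leq0n ks) (ltn_ord ks)).
pose kb := Ordinal Hb1.
have Ekb : b.-1 = kb by [].
case Ea : a.
- pose u n := odflt ord0 [pick j | ~~ obsBy B C n j].
  have Hu : forall n, (n < b)%N -> obsBy B C n (u n) = false.
    move=> n Hn; rewrite /u; case: pickP => [j /negbTE //|H0]; exfalso.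
    have [j Hj] := cnt0 HC (blk_le (Tc C) (Hinj (Ordinal Hn))).
    have := H0 j; rewrite -[n]/(val (Ordinal Hn)) obsBy_ord.
    by move: Hj; rewrite inE => /negbTE ->.
  pose jf x := odflt ord0 [pick j | ~~ obsBy B C b.-1 j && (inr (x, j) \notin C)].
  have Hjf : forall x, obsBy B C b.-1 (jf x) = false /\ inr (x, jf x) \notin C.
    move=> x; rewrite /jf; case: pickP => [j /andP[/negbTE -> ->] //|H0]; exfalso.
    have [j /andP[Hj1 Hj2]] := cnt x HC (blk_le (Tc C) (Hinj kb)).
    have := H0 j; rewrite Ekb obsBy_ord.
    by move: Hj1; rewrite inE => /negbTE ->; rewrite Hj2.
  apply: (@core_gen ks (ltn_ord ks)
    (fun P n z => if (n < b)%N then u n else jf z) (fun P n z => u n)) => //.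
  + by move=> P n z Hn _ /=; rewrite Hn.
  + by move=> H; rewrite Ea in H.
  + have Hb0 : (0 < b)%N := leq_ltn_trans (leq0n ks) (ltn_ord ks).
    by move=> P x /=; rewrite Hb0; exact: Hu.
  + move=> _ P k x Hk /=; split; first exact: Hu.
    case: ifP => Hk1; first exact: Hu.
    have Ek : k = b.-1 by move/negbT: Hk1; rewrite -leqNgt => H; lia.
    by rewrite Ek; exact: (proj1 (Hjf x)).
  + by move=> H; rewrite Ea in H.
  + by move=> P x /=; rewrite ltnn; exact: Hjf.
- have Hc := Hconf Ea.
  have HPT := PT_le ks Hc Hinj HT.
  set PTc := PT B (Tc C) in HPT.
  pose j0 := odflt ord0 [pick j | j \notin PTc].
  have Hj0 : j0 \notin PTc.
    rewrite /j0; case: pickP => [j -> //|H0]; exfalso.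
    have [j Hj] := cnt0 HC HPT; by rewrite (H0 j) in Hj.
  pose jt x := odflt ord0 [pick j | (j \notin PTc) && (inr (x, j) \notin C)].
  have Hjt : forall x, jt x \notin PTc /\ inr (x, jt x) \notin C.
    move=> x; rewrite /jt; case: pickP => [j /andP[-> ->] //|H0]; exfalso.
    have [j Hj] := cnt x HC HPT; by rewrite (H0 j) in Hj.
  pose pos P n z := if (n <= ks)%N then j0 else jt ((tauP P b)^-1%g (tauP P n z)).
  have Hpos : forall P n z, pos P n z \notin PTc.
    by move=> P n z; rewrite /pos; case: ifP => _ //; exact: (proj1 (Hjt _)).
  apply: (@core_gen ks (ltn_ord ks) pos (fun P n z => pos P n.+1 z)) => //.
  + move=> P n z Hn Hne; rewrite /pos.
    have -> : (n.+1 <= ks)%N = (n <= ks)%N.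
      by rewrite ltn_neqAle Hne.
    by rewrite /= permM.
  + by move=> P x; apply: obsBy_PT.
  + by move=> H; rewrite Ea in H.
  + by move=> _ P k x Hk; rewrite !obsBy_PT.
  + move=> P x; rewrite /pos leqNgt ltn_ord /= permK; split; last exact: (proj2 (Hjt x)).
    by apply: obsBy_PT; exact: (proj1 (Hjt x)).
Qed.

End Core.

Local Open Scope ring_scope.

Lemma inj_le (T : finType) (F : T -> T) (A B' : {set T}) :
  injective F -> (forall c, c \in A -> F c \in B') -> (#|A| <= #|B'|)%N.
Proof.
move=> Fi H; rewrite -(card_imset A Fi); apply: subset_leq_card.
by apply/subsetP => _ /imsetP[c Hc ->]; exact: H.
Qed.

Lemma card_part (T U : finType) (A : {set T}) (f : T -> U) :
  #|A| = (\sum_(z : U) #|[set c in A | f c == z]|)%N.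
Proof.
rewrite -sum1_card (partition_big f predT) //=; apply: eq_bigr => z _.
rewrite -sum1_card; apply: eq_bigl => c; by rewrite !inE.
Qed.

Section Prob.
Variables (S : finZmodType) (t b v : nat).

Definition c0 (s : Msg S v) : Coins S t b v :=
  (([ffun xj : 'I_v * 'I_t.+1 => if xj.2 == ord0 then s xj.1 else 0], [ffun _ => 1%g]),
   [ffun _ => 0], [ffun _ => 0]).

Lemma c0_in s : c0 s \in Omega t b s.
Proof.
rewrite inE; apply/andP; split; apply/forallP => x.
  rewrite /pi1 /c0 /=; under eq_bigr => j _ do rewrite ffunE /=.
  by rewrite -big_mkcond big_pred1_eq.
by apply/forallP => y; rewrite /c0 /=; under eq_bigr => j _ do rewrite ffunE; rewrite big1_eq.
Qed.

Lemma Omega_pos (s : Msg S v) : (0 < #|Omega t b s|)%N.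
Proof. by apply/card_gt0P; exists (c0 s); exact: c0_in. Qed.

Lemma Pr_const (D : {ffun Msg S v -> rat}) (T : eqType) (Y : Msg S v -> T) y :
  Pr D (fun s (c : Coins S t b v) => y == Y s) = \sum_s D s * (y == Y s)%:R.
Proof.
apply: eq_bigr => s _; congr (_ * _).
case: eqP => _ /=.
  have -> : [set c in Omega t b s | true] = Omega t b s by apply/setP => c; rewrite !inE andbT.
  by rewrite divff // pnatr_eq0 -lt0n Omega_pos.
have -> : [set c in Omega t b s | false] = set0 by apply/setP => c; rewrite !inE andbF.
by rewrite cards0 mul0r.
Qed.
End Prob.

Section Main.
Variables (S : finZmodType) (t m b v : nat) (B : 'I_b -> 'I_t.+1 -> 'I_m) (a : bool)
  (C : {set Party t m v}).
Hypothesis Hcore : forall s s' pi, goodF (S:=S) B a C s s' pi.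
Local Notation V := (view (S:=S) B a C).
Local Notation Om := (Omega (S:=S) t b).

Lemma cardV s s' (E : (label t b v -> option (Val S v)) -> bool) :
  #|[set c in Om s | E (V c)]| = #|[set c in Om s' | E (V c)]|.
Proof.
have H : forall s s', (#|[set c in Om s | E (V c)]| <= #|[set c in Om s' | E (V c)]|)%N.
  move=> s1 s2; have [F [Fi HF]] := Hcore s1 s2 1%g.
  apply: (inj_le Fi) => c; rewrite inE => /andP[Hc HE].
  by have [H1 [HV _]] := HF c Hc; rewrite inE H1 HV HE.
by apply/eqP; rewrite eqn_leq !H.
Qed.

Lemma cardY s (i : 'I_v) (E : (label t b v -> option (Val S v)) -> bool) y1 y2 :
  #|[set c in Om s | E (V c) && ((tau c b)^-1%g i == y1)]| =
  #|[set c in Om s | E (V c) && ((tau c b)^-1%g i == y2)]|.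
Proof.
have H : forall y1 y2, (#|[set c in Om s | E (V c) && ((tau c b)^-1%g i == y1)]| <=
     #|[set c in Om s | E (V c) && ((tau c b)^-1%g i == y2)]|)%N.
  move=> z1 z2; have [F [Fi HF]] := Hcore s s (tperm z1 z2).
  apply: (inj_le Fi) => c; rewrite inE => /andP[Hc /andP[HE /eqP HY]].
  have [H1 [HV HT]] := HF c Hc; rewrite inE H1 HV HT HE /=.
  by rewrite invMg permM HY tpermV tpermL.
by apply/eqP; rewrite eqn_leq !H.
Qed.

Lemma priv (D : {ffun Msg S v -> rat}) (HD : prior D) (i : 'I_v) :
  same_guess D (fun _ (c : Coins S t b v) => V c) (fun s _ => s i).
Proof.
split; last first.
  by move=> y; exists (fun _ => y); exact: lexx.
move=> g.
pose s0 : Msg S v := [ffun _ => 0].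
pose K y := #|[set c in Om s0 | g (V c) == y]|.
pose N := #|Om s0|.
have HK : forall (s : Msg S v) y, #|[set c in Om s | g (V c) == y]| = K y.
  by move=> s y; apply: (cardV s s0 (fun w => g w == y)).
have HN : forall s : Msg S v, #|Om s| = N.
  move=> s; have := cardV s s0 (fun _ => true).
  have E : forall s1 : Msg S v, [set c in Om s1 | true] = Om s1 by move=> s1; apply/setP => c; rewrite !inE andbT.
  by rewrite !E.
have N0 : (N%:R : rat) != 0 by rewrite pnatr_eq0 -lt0n Omega_pos.
pose Q y := \sum_(s : Msg S v) D s * (y == s i)%:R.
have [ys _ Hys] := @arg_maxP _ _ S 0 predT Q isT.
exists ys; rewrite Pr_const -/(Q ys) /Pr.
pose X y := (K y)%:R / (N%:R : rat).
have -> : \sum_s D s * (#|[set c in Om s | g (V c) == s i]|%:R / #|Om s|%:R) =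
          \sum_y Q y * X y.
  rewrite (eq_bigr (fun s => \sum_y D s * (y == s i)%:R * X y)); last first.
    move=> s _; rewrite (bigD1 (s i)) //= eqxx mulr1 big1 ?addr0; first by rewrite HK HN.
    by move=> y /negbTE ->; rewrite mulr0 mul0r.
  rewrite exchange_big /=; apply: eq_bigr => y _; rewrite /Q mulr_suml.
  by apply: eq_bigr.
have HX : \sum_y X y = 1.
  by rewrite /X -mulr_suml -natr_sum /K /N -card_part divff.
apply: le_trans (_ : \sum_y Q ys * X y <= _).
  apply: ler_sum => y _; apply: ler_wpM2r; first by rewrite /X divr_ge0.
  exact: Hys.
by rewrite -mulr_sumr HX mulr1.
Qed.

Lemma anon (D : {ffun Msg S v -> rat}) (HD : prior D) (i : 'I_v) :
  same_guess D (fun _ (c : Coins S t b v) => V c) (fun _ c => (tau c b)^-1%g i).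
Proof.
split; last first.
  by move=> y; exists (fun _ => y); exact: lexx.
move=> g; exists i; rewrite le_eqVlt; apply/orP; left; apply/eqP.
apply: eq_bigr => s _; congr (_ * (_ / _)); congr (_%:R).
pose Y (c : Coins S t b v) := (tau c b)^-1%g i.
rewrite (card_part _ Y).
rewrite (card_part [set c in Om s | i == Y c] (fun c => g (V c))).
apply: eq_bigr => z _.
transitivity #|[set c in Om s | (g (V c) == z) && (Y c == z)]|.
  apply: eq_card => c; rewrite !inE -!andbA /Y; congr (_ && _).
  move: (g (V c)) ((tau c b)^-1%g i) => u w.
  by case: (w == z) /eqP => [->|]; rewrite ?andbF ?andbT.
rewrite (cardY s i (fun w => g w == z) z i).
apply: eq_card => c; rewrite !inE -!andbA /Y; congr (_ && _).
move: (g (V c)) ((tau c b)^-1%g i) => u w.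
by rewrite (eq_sym i) [(w == i) && _]andbC.
Qed.

End Main.

Lemma reliable (S : finZmodType) (t b v : nat) (a : bool) : @perfectly_reliable S t b v a.
Proof.
move=> D [HD0 HD1]; rewrite /Pr -[RHS]HD1; apply: eq_bigr => s _.
have -> : [set c in Omega t b s | [forall i, output a c i == s (tau c b i)]] = Omega t b s.
  apply/setP => c; rewrite inE andb_idr // => Hc; apply/forallP => i.
  by rewrite /output /phi (sh_sum a i Hc (leqnn b)).
by rewrite divff ?mulr1 // pnatr_eq0 -lt0n Omega_pos.
Qed.

Theorem corollary2 (S : finZmodType) (t m b v : nat) (B : 'I_b -> 'I_t.+1 -> 'I_m)
  (a : bool) :
  (0 < t)%N -> verifiers B -> (a = false -> t_confined B) ->
  @perfectly_reliable S t b v a /\ @perfectly_private S t m b v B a /\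
  @perfectly_anonymous S t m b v B a.
Proof.
move=> Ht Hv Hc; split; first exact: reliable.
split=> D HD C HC i.
  by apply: priv => // s s' pi; apply: core.
by apply: anon => // s s' pi; apply: core.
Qed.
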